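(* There exist absolute constants $c>0$ and $C>0$ such that the following holds. Let $n\ge2$ be an integer and $L,B,\varepsilon>0$ with $\varepsilon\le LB^2/4$. Then for every PIFO algorithm $\mathcal{A}$ there exist a dimension $d\le C\big(1+Bn^{-1/4}\sqrt{L/\varepsilon}\big)$ and functions $f_1,\dots,f_n:\mathbb{R}^d\to\mathbb{R}$ such that $\{f_i\}_{i=1}^n$ is $L$-average smooth, $f=\frac1n\sum_i f_i$ is convex and has a minimizer $x^*$ with $\|x_0-x^*\|_2\le B$ ($x_0$ the initial point of $\mathcal{A}$), and the iterates of $\mathcal{A}$ satisfy $\mathbb{E} f(x_t)-f(x^* )\ge\varepsilon$ for all integers $0\le t\le c\big(n+Bn^{3/4}\sqrt{L/\varepsilon}\big)$. That is, $\mathcal{A}$ needs $\Omega(n+Bn^{3/4}\sqrt{L/\varepsilon})$ oracle queries.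
   Context: Differentiable $f_1,\dots,f_n:\mathbb{R}^d\to\mathbb{R}$ are $L$-average smooth if $\frac1n\sum_{i=1}^n\|\nabla f_i(x)-\nabla f_i(y)\|_2^2\le L^2\|x-y\|_2^2$ for all $x,y$. For $\gamma>0$, $\mathrm{prox}^{\gamma}_g(x)=\arg\min_u\{g(u)+\frac{1}{2\gamma}\|x-u\|_2^2\}$. PIFO algorithm: given $f_1,\dots,f_n:\mathbb{R}^d\to\mathbb{R}$ and $f=\frac1n\sum_i f_i$, a PIFO algorithm $\mathcal{A}$ is specified by a probability vector $(p_1,\dots,p_n)$ ($p_j\ge0$, $\sum_j p_j=1$), an initial point $x_0$ and parameters $\gamma_t>0$; it draws indices $i_1,i_2,\dots$ independently with $\mathbb{P}(i_t=j)=p_j$, at step $t\ge1$ queries the oracle $h_f(x_{t-1},i_t,\gamma_t)=[f_{i_t}(x_{t-1}),\nabla f_{i_t}(x_{t-1}),\mathrm{prox}^{\gamma_t}_{f_{i_t}}(x_{t-1})]$, and outputs an iterate $x_t\in\mathrm{span}\{x_0,\dots,x_{t-1},\nabla f_{i_1}(x_0),\dots,\nabla f_{i_t}(x_{t-1}),\mathrm{prox}^{\gamma_1}_{f_{i_1}}(x_0),\dots,\mathrm{prox}^{\gamma_t}_{f_{i_t}}(x_{t-1})\}$ (the choice within the span may depend on all previously observed information). Iterate $x_t$ uses $t$ oracle queries. *)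

(* Defs.v *)
From Stdlib Require Import Reals List.
Import ListNotations.
Open Scope R_scope.

(* Vectors of R^d are represented as functions nat -> R that vanish from
   index d on (predicate [inR d]). *)
Definition vec := nat -> R.

Fixpoint sumd (d : nat) (u : nat -> R) : R :=
  match d with O => 0 | S k => sumd k u + u k end.

Definition inR (d : nat) (x : vec) : Prop := forall k, (d <= k)%nat -> x k = 0.

Definition vadd (x y : vec) : vec := fun k => x k + y k.
Definition vsub (x y : vec) : vec := fun k => x k - y k.
Definition vscal (a : R) (x : vec) : vec := fun k => a * x k.
Definition vzero : vec := fun _ => 0.

Definition dot (d : nat) (x y : vec) : R := sumd d (fun k => x k * y k).
Definition norm2 (d : nat) (x : vec) : R := dot d x x.
Definition norm (d : nat) (x : vec) : R := sqrt (norm2 d x).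

Definition has_grad (d : nat) (f : vec -> R) (x g : vec) : Prop :=
  inR d g /\
  forall eps, 0 < eps -> exists delta, 0 < delta /\
    forall h, inR d h -> norm d h < delta ->
      Rabs (f (vadd x h) - f x - dot d g h) <= eps * norm d h.

Definition is_prox (d : nat) (g : vec -> R) (gamma : R) (x u : vec) : Prop :=
  inR d u /\
  forall v, inR d v ->
    g u + / (2 * gamma) * norm2 d (vsub x u) <= g v + / (2 * gamma) * norm2 d (vsub x v).

Definition convex_on (d : nat) (F : vec -> R) : Prop :=
  forall x y a, inR d x -> inR d y -> 0 <= a <= 1 ->
    F (vadd (vscal a x) (vscal (1 - a) y)) <= a * F x + (1 - a) * F y.

Definition avg_smooth (n d : nat) (gf : nat -> vec -> vec) (L : R) : Prop :=
  forall x y, inR d x -> inR d y ->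
    / INR n * sumd n (fun i => norm2 d (vsub (gf i x) (gf i y)))
      <= L ^ 2 * norm2 d (vsub x y).

Definition favg (n : nat) (f : nat -> vec -> R) : vec -> R :=
  fun x => / INR n * sumd n (fun i => f i x).

(* One oracle answer: index i_t, f_{i_t}(x_{t-1}), grad f_{i_t}(x_{t-1}),
   prox^{gamma_t}_{f_{i_t}}(x_{t-1}). *)
Record obs := mkobs { oidx : nat; oval : R; ograd : vec; oprox : vec }.

(* A PIFO algorithm (in a given dimension): probability vector p, initial
   point x0, parameters gamma_t, and the rule producing x_t from the whole
   observed history (histories are lists, most recent observation first). *)
Record pifo := mkpifo {
  pp : nat -> R;
  px0 : vec;
  pgam : nat -> R;
  pnext : list obs -> vec }.

Definition xof (A : pifo) (h : list obs) : vec :=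
  match h with [] => px0 A | _ :: _ => pnext A h end.

Fixpoint tails {T} (l : list T) : list (list T) :=
  match l with [] => [] | _ :: l' => l' :: tails l' end.

Fixpoint lincomb (cs : list R) (vs : list vec) : vec :=
  match cs, vs with
  | c :: cs', v :: vs' => vadd (vscal c v) (lincomb cs' vs')
  | _, _ => vzero
  end.

Definition in_span (S : list vec) (v : vec) : Prop :=
  exists cs, length cs = length S /\ v = lincomb cs S.

(* the vectors available when producing x_t from history h (length t):
   x_0,...,x_{t-1}, the gradients and the prox outputs observed. *)
Definition span_set (A : pifo) (h : list obs) : list vec :=
  map (xof A) (tails h) ++ map ograd h ++ map oprox h.

Definition valid_pifo (n d : nat) (A : pifo) : Prop :=
  (forall j, (j < n)%nat -> 0 <= pp A j) /\ sumd n (pp A) = 1 /\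
  inR d (px0 A) /\
  (forall t, (1 <= t)%nat -> 0 < pgam A t) /\
  (forall h, h <> [] -> in_span (span_set A h) (pnext A h)).

(* history generated by the index sequence is = [i_t; ...; i_1] *)
Fixpoint hist (A : pifo) (f : nat -> vec -> R) (gf : nat -> vec -> vec)
    (prox : nat -> R -> vec -> vec) (is : list nat) : list obs :=
  match is with
  | [] => []
  | i :: is' =>
      let h := hist A f gf prox is' in
      let x := xof A h in
      mkobs i (f i x) (gf i x) (prox i (pgam A (S (length is'))) x) :: h
  end.

(* expectation over t i.i.d. indices with law p on {0,...,n-1} *)
Fixpoint expect (n : nat) (p : nat -> R) (t : nat) (G : list nat -> R) : R :=
  match t with
  | O => G []
  | S t' => sumd n (fun j => p j * expect n p t' (fun l => G (j :: l)))
  end.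

(* Main.v *)
Require Import Defs.
From Stdlib Require Import Reals List Lra Lia Psatz Classical.
Import ListNotations.
Open Scope R_scope.

Lemma sumd_ext d u v : (forall k, (k < d)%nat -> u k = v k) -> sumd d u = sumd d v.
Proof. induction d; simpl; intros H; auto. rewrite IHd by (intros; apply H; lia). rewrite H by lia. auto. Qed.

Lemma sumd_add d u v : sumd d (fun k => u k + v k) = sumd d u + sumd d v.
Proof. induction d; simpl; [lra|]. rewrite IHd; lra. Qed.

Lemma sumd_scal d c u : sumd d (fun k => c * u k) = c * sumd d u.
Proof. induction d; simpl; [lra|]. rewrite IHd; lra. Qed.

Lemma sumd_sub d u v : sumd d (fun k => u k - v k) = sumd d u - sumd d v.
Proof. induction d; simpl; [lra|]. rewrite IHd; lra. Qed.

Lemma sumd_zero d : sumd d (fun _ => 0) = 0.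
Proof. induction d; simpl; [lra|]. rewrite IHd; lra. Qed.

Lemma sumd_const d c : sumd d (fun _ => c) = INR d * c.
Proof. induction d; simpl sumd; [simpl; lra|]. rewrite IHd, S_INR; lra. Qed.

Lemma sumd_le d u v : (forall k, (k < d)%nat -> u k <= v k) -> sumd d u <= sumd d v.
Proof. induction d; simpl; intros H; [lra|]. pose proof (H d ltac:(lia)). pose proof (IHd ltac:(intros; apply H; lia)). lra. Qed.

Lemma sumd_nonneg d u : (forall k, (k < d)%nat -> 0 <= u k) -> 0 <= sumd d u.
Proof. intros H. rewrite <- (sumd_zero d). apply sumd_le. auto. Qed.

Lemma sumd_exch d P F : sumd d (fun k => sumd P (fun p => F k p)) = sumd P (fun p => sumd d (fun k => F k p)).
Proof. induction d; simpl. - rewrite sumd_zero; auto. - rewrite IHd, <- sumd_add. auto. Qed.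

Lemma sumd_single P F p : (p < P)%nat -> (forall q, (q < P)%nat -> q <> p -> F q = 0) -> sumd P F = F p.
Proof.
  induction P; intros Hp H; [lia|]. simpl.
  destruct (Nat.eq_dec p P).
  - subst. rewrite (sumd_ext _ _ (fun _ => 0)), sumd_zero. lra. intros; apply H; lia.
  - rewrite IHP by (auto; lia). rewrite (H P) by lia. lra.
Qed.

Lemma sumd_two d F a b : (a < d)%nat -> (b < d)%nat -> a <> b ->
  (forall k, (k < d)%nat -> k <> a -> k <> b -> F k = 0) -> sumd d F = F a + F b.
Proof.
  induction d; intros Ha Hb Hab H; [lia|]. simpl.
  destruct (Nat.eq_dec a d); destruct (Nat.eq_dec b d); subst; try lia.
  - rewrite (sumd_single d F b) by (auto; lia || (intros; apply H; lia)). lra.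
  - rewrite (sumd_single d F a) by (auto; lia || (intros; apply H; lia)). lra.
  - rewrite IHd by (auto; lia || (intros; apply H; lia)). rewrite (H d) by lia. lra.
Qed.

Lemma sumd_shift k F : sumd (S k) F = F 0%nat + sumd k (fun j => F (S j)).
Proof. induction k; simpl; [lra|]. simpl in IHk. rewrite IHk. lra. Qed.

Lemma sumd_shift_last M (G : nat -> R) : sumd (S M) G = sumd M G + G M.
Proof. reflexivity. Qed.

Lemma sumd_pairs M F : sumd (2 * M) F = sumd M (fun p => F (2 * p)%nat + F (2 * p + 1)%nat).
Proof.
  induction M; [simpl; lra|].
  replace (2 * S M)%nat with (S (S (2 * M))) by lia. change (sumd (S (S (2*M))) F) with (sumd (2*M) F + F (2*M)%nat + F (S (2*M))).
  rewrite IHM. rewrite (sumd_shift_last M). replace (2 * M + 1)%nat with (S (2*M)) by lia. lra.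
Qed.

Lemma sumd_mono_len K m F : (K <= m)%nat -> (forall k, 0 <= F k) -> sumd K F <= sumd m F.
Proof. intros H HF. induction H; [lra|]. simpl. pose proof (HF m). lra. Qed.

Lemma CS_sumd d u v : (sumd d (fun k => u k * v k))^2 <= sumd d (fun k => u k ^ 2) * sumd d (fun k => v k ^ 2).
Proof.
  set (A := sumd d (fun k => u k ^ 2)). set (B := sumd d (fun k => v k ^ 2)).
  set (C := sumd d (fun k => u k * v k)).
  assert (Hq : forall s, 0 <= A * s^2 - 2 * C * s + B).
  { intros s. assert (E : A * s^2 - 2*C*s + B = sumd d (fun k => (u k * s - v k)^2)).
    { unfold A, B, C. rewrite (sumd_ext d (fun k => (u k * s - v k)^2) (fun k => (s^2 * u k^2 + (-(2*s)) * (u k * v k)) + v k^2)) by (intros; ring).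
      rewrite sumd_add, sumd_add, sumd_scal, sumd_scal. ring. }
    rewrite E. apply sumd_nonneg. intros; apply pow2_ge_0. }
  assert (HA : 0 <= A) by (apply sumd_nonneg; intros; apply pow2_ge_0).
  assert (HB : 0 <= B) by (apply sumd_nonneg; intros; apply pow2_ge_0).
  destruct (Req_dec A 0) as [H0|H0].
  - assert (C = 0). { destruct (Req_dec C 0); auto. pose proof (Hq ((B+1)/(2*C))). rewrite H0 in H1.
      replace (0 * ((B + 1) / (2 * C)) ^ 2 - 2 * C * ((B + 1) / (2 * C)) + B) with (-1) in H1 by (field; auto). lra. }
    rewrite H, H0. lra.
  - pose proof (Hq (C / A)).
    replace (A * (C / A) ^ 2 - 2 * C * (C / A) + B) with ((A*B - C^2)/A) in H by (field; auto).
    assert (0 < A) by lra.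
    assert (0 <= A * B - C^2). { apply (Rmult_le_compat_r A) in H; [|lra]. field_simplify in H; lra. }
    lra.
Qed.

Lemma sumd_sq_bound K y : (sumd K y)^2 <= INR K * sumd K (fun k => y k ^ 2).
Proof.
  pose proof (CS_sumd K (fun _ => 1) y). simpl in H.
  rewrite (sumd_ext K (fun k => 1 * y k) y) in H by (intros; ring).
  rewrite (sumd_ext K (fun _ => 1*(1*1)) (fun _ => 1)), sumd_const in H by (intros; ring).
  rewrite (sumd_ext K (fun k => y k ^ 2) (fun k => y k * (y k * 1))) by (intros; ring). lra.
Qed.

Lemma sumd_avg n F : (1 <= n)%nat -> exists j, (j < n)%nat /\ F j <= sumd n F / INR n.
Proof.
  intros Hn. destruct (classic (exists j, (j < n)%nat /\ F j <= sumd n F / INR n)) as [H|H]; auto.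
  exfalso. assert (Hall : forall j, (j < n)%nat -> sumd n F / INR n < F j).
  { intros j Hj. destruct (Rlt_le_dec (sumd n F / INR n) (F j)); auto. exfalso; apply H; eauto. }
  assert (sumd n (fun _ => sumd n F / INR n) < sumd n F).
  { clear H. destruct n; [lia|]. simpl. apply Rplus_le_lt_compat.
    apply sumd_le; intros; apply Rlt_le, Hall; lia. apply Hall; lia. }
  rewrite sumd_const in H0. assert (0 < INR n) by (apply lt_0_INR; lia).
  field_simplify in H0; lra.
Qed.

Definition vsum (P : nat) (c : nat -> R) (w : nat -> vec) : vec :=
  fun k => sumd P (fun p => c p * w p k).

Lemma dot_comm d x y : dot d x y = dot d y x.
Proof. unfold dot. apply sumd_ext; intros; ring. Qed.

Lemma dot_add_r d x y z : dot d x (vadd y z) = dot d x y + dot d x z.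
Proof. unfold dot, vadd. rewrite <- sumd_add. apply sumd_ext; intros; ring. Qed.
Lemma dot_sub_r d x y z : dot d x (vsub y z) = dot d x y - dot d x z.
Proof. unfold dot, vsub. rewrite <- sumd_sub. apply sumd_ext; intros; ring. Qed.
Lemma dot_scal_r d x a y : dot d x (vscal a y) = a * dot d x y.
Proof. unfold dot, vscal. rewrite <- sumd_scal. apply sumd_ext; intros; ring. Qed.
Lemma dot_zero_r d x : dot d x vzero = 0.
Proof. unfold dot. rewrite <- (sumd_zero d). apply sumd_ext; intros; unfold vzero; ring. Qed.
Lemma dot_add_l d x y z : dot d (vadd y z) x = dot d y x + dot d z x.
Proof. rewrite !(dot_comm d _ x). apply dot_add_r. Qed.
Lemma dot_sub_l d x y z : dot d (vsub y z) x = dot d y x - dot d z x.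
Proof. rewrite !(dot_comm d _ x). apply dot_sub_r. Qed.
Lemma dot_scal_l d x a y : dot d (vscal a y) x = a * dot d y x.
Proof. rewrite !(dot_comm d _ x). apply dot_scal_r. Qed.
Lemma dot_zero_l d x : dot d vzero x = 0.
Proof. rewrite dot_comm. apply dot_zero_r. Qed.

Lemma dot_vsum_r d x P c w : dot d x (vsum P c w) = sumd P (fun p => c p * dot d x (w p)).
Proof.
  unfold dot, vsum.
  rewrite (sumd_ext d _ (fun k => sumd P (fun p => x k * (c p * w p k)))).
  2:{ intros. rewrite <- sumd_scal. auto. }
  rewrite sumd_exch. apply sumd_ext. intros. rewrite <- sumd_scal. apply sumd_ext; intros; ring.
Qed.
Lemma dot_vsum_l d x P c w : dot d (vsum P c w) x = sumd P (fun p => c p * dot d (w p) x).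
Proof. rewrite dot_comm, dot_vsum_r. apply sumd_ext; intros. rewrite dot_comm; auto. Qed.

Lemma dot_ext_r d x y y' : (forall k, (k < d)%nat -> y k = y' k) -> dot d x y = dot d x y'.
Proof. intros H. unfold dot. apply sumd_ext. intros. rewrite H; auto. Qed.
Lemma dot_ext_l d x x' y : (forall k, (k < d)%nat -> x k = x' k) -> dot d x y = dot d x' y.
Proof. intros H. unfold dot. apply sumd_ext. intros. rewrite H; auto. Qed.

Lemma norm2_nonneg d x : 0 <= norm2 d x.
Proof. unfold norm2, dot. apply sumd_nonneg. intros. nra. Qed.

Lemma norm_sq d x : norm d x ^ 2 = norm2 d x.
Proof. unfold norm. rewrite <- Rsqr_pow2. apply Rsqr_sqrt, norm2_nonneg. Qed.

Lemma norm_nonneg d x : 0 <= norm d x.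
Proof. unfold norm. apply sqrt_pos. Qed.

Lemma CS_dot d x y : (dot d x y)^2 <= norm2 d x * norm2 d y.
Proof.
  unfold norm2, dot. pose proof (CS_sumd d x y).
  rewrite (sumd_ext d (fun k => x k ^2) (fun k => x k * x k)) in H by (intros; ring).
  rewrite (sumd_ext d (fun k => y k ^2) (fun k => y k * y k)) in H by (intros; ring). auto.
Qed.

Lemma norm2_vadd d x y : norm2 d (vadd x y) = norm2 d x + 2 * dot d x y + norm2 d y.
Proof. unfold norm2. rewrite dot_add_l, !dot_add_r, (dot_comm d y x). ring. Qed.

Lemma inR_vsum d P c w : (forall p, (p < P)%nat -> inR d (w p)) -> inR d (vsum P c w).
Proof. intros H k Hk. unfold vsum. rewrite <- (sumd_zero P). apply sumd_ext. intros. rewrite H; auto; ring. Qed.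
Lemma inR_vadd d x y : inR d x -> inR d y -> inR d (vadd x y).
Proof. intros Hx Hy k Hk. unfold vadd. rewrite Hx, Hy; auto; ring. Qed.
Lemma inR_vsub d x y : inR d x -> inR d y -> inR d (vsub x y).
Proof. intros Hx Hy k Hk. unfold vsub. rewrite Hx, Hy; auto; ring. Qed.

Lemma norm2_vsum_orth d P c w :
  (forall p q, (p < P)%nat -> (q < P)%nat -> p <> q -> dot d (w p) (w q) = 0) ->
  norm2 d (vsum P c w) = sumd P (fun p => c p ^ 2 * norm2 d (w p)).
Proof.
  intros Ho. unfold norm2. rewrite dot_vsum_l. apply sumd_ext. intros p Hp.
  rewrite dot_vsum_r. rewrite (sumd_single P _ p); auto.
  - unfold norm2; ring.
  - intros q Hq Hqp. rewrite Ho; auto. ring.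
Qed.

Record comp := mkcomp { cP : nat; cw : nat -> vec; ca : nat -> R; cb : nat -> R }.

Definition Phi d C (x : vec) : R :=
  sumd (cP C) (fun p => ca C p / 2 * (dot d (cw C p) x)^2 - cb C p * dot d (cw C p) x).
Definition coef d C (x : vec) p : R := ca C p * dot d (cw C p) x - cb C p.
Definition Grad d C (x : vec) : vec := vsum (cP C) (coef d C x) (cw C).
Definition pc d C (g : R) (x : vec) p : R :=
  - g * coef d C x p / (1 + g * ca C p * norm2 d (cw C p)).
Definition Prox d C (g : R) (x : vec) : vec := vadd x (vsum (cP C) (pc d C g x) (cw C)).

Definition valid_comp d C :=
  (forall p, (p < cP C)%nat -> inR d (cw C p) /\ 0 <= ca C p) /\
  (forall p q, (p < cP C)%nat -> (q < cP C)%nat -> p <> q -> dot d (cw C p) (cw C q) = 0).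

Lemma norm2_vsub d x y : norm2 d (vsub x y) = norm2 d x - 2 * dot d x y + norm2 d y.
Proof. unfold norm2. rewrite dot_sub_l, !dot_sub_r, (dot_comm d y x). ring. Qed.

Lemma norm2_ext d x y : (forall k, x k = y k) -> norm2 d x = norm2 d y.
Proof. intros H. unfold norm2, dot. apply sumd_ext. intros. rewrite !H. auto. Qed.

Lemma grad_ok d C x : valid_comp d C -> has_grad d (Phi d C) x (Grad d C x).
Proof.
  intros [HV HO]. split.
  { apply inR_vsum. intros; apply HV; auto. }
  intros eps Heps.
  set (M := sumd (cP C) (fun p => ca C p / 2 * norm2 d (cw C p))).
  assert (HM : 0 <= M). { apply sumd_nonneg. intros. pose proof (norm2_nonneg d (cw C k)). destruct (HV k H). nra. }
  exists (eps / (M + 1)). split. { apply Rdiv_lt_0_compat; lra. }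
  intros h _ Hh.
  assert (E : Phi d C (vadd x h) - Phi d C x - dot d (Grad d C x) h =
     sumd (cP C) (fun p => ca C p / 2 * (dot d (cw C p) h)^2)).
  { unfold Phi, Grad. rewrite dot_vsum_l. rewrite <- !sumd_sub. apply sumd_ext. intros.
    rewrite dot_add_r. unfold coef. field. }
  rewrite E.
  assert (H1 : 0 <= sumd (cP C) (fun p => ca C p / 2 * (dot d (cw C p) h)^2)).
  { apply sumd_nonneg. intros. destruct (HV k H). apply Rmult_le_pos; [lra| apply pow2_ge_0]. }
  assert (H2 : sumd (cP C) (fun p => ca C p / 2 * (dot d (cw C p) h)^2) <= M * norm2 d h).
  { unfold M. rewrite Rmult_comm, <- sumd_scal. apply sumd_le. intros. destruct (HV k H).
    pose proof (CS_dot d (cw C k) h). pose proof (norm2_nonneg d h). pose proof (norm2_nonneg d (cw C k)). nra. }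
  rewrite Rabs_right by lra.
  rewrite <- norm_sq in H2. pose proof (norm_nonneg d h).
  assert (M * norm d h ^ 2 <= eps * norm d h).
  { assert (M * norm d h <= eps). { apply Rle_trans with (M * (eps / (M+1))). apply Rmult_le_compat_l; lra.
      unfold Rdiv. rewrite <- Rmult_assoc. apply Rmult_le_reg_r with (M+1); [lra|].
      rewrite Rmult_assoc, Rinv_l by lra. nra. }
    simpl. nra. }
  lra.
Qed.

Lemma Phi_convex d C x y a : valid_comp d C -> 0 <= a <= 1 ->
  Phi d C (vadd (vscal a x) (vscal (1 - a) y)) <= a * Phi d C x + (1 - a) * Phi d C y.
Proof.
  intros [HV _] Ha. unfold Phi. rewrite <- !sumd_scal, <- sumd_add. apply sumd_le. intros p Hp.
  destruct (HV p Hp). rewrite dot_add_r, !dot_scal_r.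
  set (s := dot d (cw C p) x). set (r := dot d (cw C p) y).
  assert (0 <= ca C p / 2 * (a * (1 - a)) * (s - r)^2).
  { apply Rmult_le_pos; [apply Rmult_le_pos; nra|apply pow2_ge_0]. }
  nra.
Qed.

Lemma dot_w_prox d C g x p : valid_comp d C -> (p < cP C)%nat ->
  dot d (cw C p) (Prox d C g x) = dot d (cw C p) x + pc d C g x p * norm2 d (cw C p).
Proof.
  intros [HV HO] Hp. unfold Prox. rewrite dot_add_r, dot_vsum_r.
  rewrite (sumd_single _ _ p).
  - unfold norm2; ring.
  - auto.
  - intros q Hq Hqp. rewrite HO; auto. ring.
Qed.

Lemma prox_ok d C g x : valid_comp d C -> 0 < g -> inR d x -> is_prox d (Phi d C) g x (Prox d C g x).
Proof.
  intros HVC Hg Hx. pose proof HVC as [HV HO]. split.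
  { apply inR_vadd; auto. apply inR_vsum; intros; apply HV; auto. }
  intros v Hv. set (u := Prox d C g x).
  assert (H1 : Phi d C v >= Phi d C u + sumd (cP C) (fun p => coef d C u p * (dot d (cw C p) v - dot d (cw C p) u))).
  { unfold Phi. rewrite <- sumd_add. apply Rle_ge, sumd_le. intros p Hp. destruct (HV p Hp). unfold coef.
    set (s := dot d (cw C p) u). set (r := dot d (cw C p) v).
    assert (0 <= ca C p / 2 * (r - s)^2) by (apply Rmult_le_pos; [lra|apply pow2_ge_0]). nra. }
  assert (E1 : norm2 d (vsub x v) = norm2 d (vadd (vsub x u) (vsub u v))).
  { apply norm2_ext. intros; unfold vsub, vadd; ring. }
  rewrite norm2_vadd in E1.
  assert (E2 : dot d (vsub x u) (vsub u v) = - sumd (cP C) (fun p => pc d C g x p * (dot d (cw C p) u - dot d (cw C p) v))).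
  { rewrite dot_comm. assert (E3 : dot d (vsub u v) (vsub x u) = - dot d (vsub u v) (vsum (cP C) (pc d C g x) (cw C))).
    { transitivity (dot d (vsub u v) (vscal (-1) (vsum (cP C) (pc d C g x) (cw C)))).
      2:{ rewrite dot_scal_r. ring. }
      apply dot_ext_r. intros. unfold u, Prox, vsub, vadd, vscal. ring. }
    rewrite E3, dot_vsum_r. f_equal. apply sumd_ext. intros. rewrite dot_sub_l, !(dot_comm d _ (cw C k)). auto. }
  assert (Hz : sumd (cP C) (fun p => coef d C u p * (dot d (cw C p) v - dot d (cw C p) u))
     - / g * sumd (cP C) (fun p => pc d C g x p * (dot d (cw C p) u - dot d (cw C p) v)) = 0).
  { rewrite <- sumd_scal, <- sumd_sub. rewrite <- (sumd_zero (cP C)). apply sumd_ext. intros p Hp.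
    destruct (HV p Hp). unfold coef at 1. unfold u. rewrite dot_w_prox by auto.
    unfold pc, coef. pose proof (norm2_nonneg d (cw C p)).
    assert (0 < 1 + g * ca C p * norm2 d (cw C p)). { assert (0 <= g * ca C p * norm2 d (cw C p)) by (apply Rmult_le_pos; [apply Rmult_le_pos|]; lra). lra. }
    field. split; lra. }
  pose proof (norm2_nonneg d (vsub u v)).
  assert (0 < / (2 * g)) by (apply Rinv_0_lt_compat; lra).
  replace (/ (2*g)) with (/g * /2) in * by (field; lra).
  assert (0 < / g) by (apply Rinv_0_lt_compat; lra).
  rewrite E1, E2. nra.
Qed.

Lemma Grad_diff d C x y k : vsub (Grad d C x) (Grad d C y) k = vsum (cP C) (fun p => ca C p * dot d (cw C p) (vsub x y)) (cw C) k.
Proof. unfold vsub at 1, Grad, vsum. rewrite <- sumd_sub. apply sumd_ext. intros. unfold coef. rewrite dot_sub_r. ring. Qed.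

Lemma bessel d C v : valid_comp d C -> (forall p, (p < cP C)%nat -> 0 < norm2 d (cw C p)) ->
  sumd (cP C) (fun p => (dot d (cw C p) v)^2 / norm2 d (cw C p)) <= norm2 d v.
Proof.
  intros [HV HO] HN. set (c := fun p => dot d (cw C p) v / norm2 d (cw C p)).
  pose proof (norm2_nonneg d (vsub v (vsum (cP C) c (cw C)))).
  rewrite norm2_vsub, dot_vsum_r in H. rewrite (norm2_vsum_orth d _ _ _ HO) in H.
  assert (E : sumd (cP C) (fun p => c p * dot d v (cw C p)) = sumd (cP C) (fun p => (dot d (cw C p) v)^2 / norm2 d (cw C p))).
  { apply sumd_ext. intros. unfold c. rewrite dot_comm. pose proof (HN k H0). field. lra. }
  assert (E' : sumd (cP C) (fun p => c p ^ 2 * norm2 d (cw C p)) = sumd (cP C) (fun p => (dot d (cw C p) v)^2 / norm2 d (cw C p))).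
  { apply sumd_ext. intros. unfold c. pose proof (HN k H0). field. lra. }
  lra.
Qed.

Lemma smooth_comp d C amax Nmax x y : valid_comp d C ->
  (forall p, (p < cP C)%nat -> ca C p <= amax /\ 0 < norm2 d (cw C p) <= Nmax) ->
  norm2 d (vsub (Grad d C x) (Grad d C y)) <= Nmax ^ 2 * amax ^ 2 * norm2 d (vsub x y).
Proof.
  intros HVC HB. pose proof HVC as [HV HO].
  rewrite (norm2_ext d _ _ (Grad_diff d C x y)).
  rewrite (norm2_vsum_orth d _ _ _ HO).
  pose proof (bessel d C (vsub x y) HVC ltac:(intros; apply HB; auto)).
  apply Rle_trans with (Nmax ^ 2 * amax^2 * sumd (cP C) (fun p => (dot d (cw C p) (vsub x y))^2 / norm2 d (cw C p))).
  2:{ apply Rmult_le_compat_l; auto. pose proof (pow2_ge_0 amax). pose proof (pow2_ge_0 Nmax). nra. }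
  rewrite <- sumd_scal. apply sumd_le. intros p Hp. destruct (HB p Hp) as [Ha [HN1 HN2]]. destruct (HV p Hp).
  set (N := norm2 d (cw C p)) in *. set (s := dot d (cw C p) (vsub x y)) in *. clearbody N s.
  assert (HN0 : N <> 0) by lra.
  replace ((ca C p * s) ^ 2 * N) with ((ca C p)^2 * N^2 * (s^2 / N)) by (field; exact HN0).
  assert (H2 : 0 <= s^2/N) by (unfold Rdiv; apply Rmult_le_pos; [apply pow2_ge_0|apply Rlt_le, Rinv_0_lt_compat; lra]).
  apply Rmult_le_compat_r; [exact H2|]. assert (ca C p ^ 2 <= amax ^ 2) by (apply pow_incr; lra).
  assert (N^2 <= Nmax^2) by (apply pow_incr; lra). assert (0 <= ca C p ^ 2) by apply pow2_ge_0.
  assert (0 <= N^2) by apply pow2_ge_0. nra.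
Qed.

Definition rr (x0 : vec) (l : nat) : R := sqrt (x0 (2*l)%nat ^ 2 + x0 (2*l+1)%nat ^ 2).

Definition u (m : nat) (x0 : vec) (l : nat) : vec := fun i =>
  if (l <? m)%nat then
    (if Rlt_dec 0 (rr x0 l) then
       (if (i =? 2*l)%nat then x0 (2*l+1)%nat / rr x0 l
        else if (i =? 2*l+1)%nat then - x0 (2*l)%nat / rr x0 l else 0)
     else (if (i =? 2*l)%nat then 1 else 0))
  else 0.

Lemma u_off m x0 l i : i <> (2*l)%nat -> i <> (2*l+1)%nat -> u m x0 l i = 0.
Proof.
  intros H1 H2. unfold u. destruct (l <? m)%nat; auto. destruct (Rlt_dec _ _);
  destruct (Nat.eqb_spec i (2*l)); try lia; auto; destruct (Nat.eqb_spec i (2*l+1)); try lia; auto.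
Qed.

Lemma u_big m x0 l i : (m <= l)%nat -> u m x0 l i = 0.
Proof. intros H. unfold u. destruct (Nat.ltb_spec l m); auto; lia. Qed.

Lemma u_inR m x0 l : inR (2*m) (u m x0 l).
Proof.
  intros i Hi. destruct (Nat.lt_ge_cases l m).
  - apply u_off; lia.
  - apply u_big; auto.
Qed.

Lemma dot_u m x0 l v : dot (2*m) (u m x0 l) v =
  if (l <? m)%nat then u m x0 l (2*l)%nat * v (2*l)%nat + u m x0 l (2*l+1)%nat * v (2*l+1)%nat else 0.
Proof.
  destruct (Nat.ltb_spec l m).
  - unfold dot. rewrite (sumd_two _ _ (2*l) (2*l+1)); try lia; auto.
    intros. rewrite u_off by lia. ring.
  - unfold dot. rewrite <- (sumd_zero (2*m)). apply sumd_ext. intros. rewrite u_big by lia. ring.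
Qed.

Lemma rr_sq x0 l : rr x0 l ^ 2 = x0 (2*l)%nat ^ 2 + x0 (2*l+1)%nat ^ 2.
Proof. unfold rr. rewrite <- Rsqr_pow2. apply Rsqr_sqrt. nra. Qed.

Lemma rr_zero x0 l : ~ 0 < rr x0 l -> x0 (2*l)%nat = 0 /\ x0 (2*l+1)%nat = 0.
Proof.
  intros H. pose proof (sqrt_pos (x0 (2*l)%nat ^ 2 + x0 (2*l+1)%nat ^ 2)).
  assert (rr x0 l = 0) by (unfold rr in *; lra).
  pose proof (rr_sq x0 l). rewrite H1 in H2. split; nra.
Qed.

Lemma du m x0 l l' : dot (2*m) (u m x0 l) (u m x0 l') = if andb (l =? l')%nat (l <? m)%nat then 1 else 0.
Proof.
  rewrite dot_u. destruct (Nat.ltb_spec l m); destruct (Nat.eqb_spec l l'); cbn [andb].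
  - subst. unfold u. destruct (Nat.ltb_spec l' m); try lia.
    destruct (Rlt_dec 0 (rr x0 l')).
    + rewrite Nat.eqb_refl. destruct (Nat.eqb_spec (2*l'+1) (2*l')); try lia. rewrite Nat.eqb_refl.
      pose proof (rr_sq x0 l') as Hr. transitivity ((x0 (2*l')%nat ^ 2 + x0 (2*l'+1)%nat ^ 2) / rr x0 l' ^ 2). field; lra. rewrite <- Hr. field; lra.
    + rewrite Nat.eqb_refl. destruct (Nat.eqb_spec (2*l'+1) (2*l')); try lia. ring.
  - rewrite (u_off m x0 l' (2*l)), (u_off m x0 l' (2*l+1)) by lia. ring.
  - auto.
  - auto.
Qed.

Lemma u_x0 m x0 l : dot (2*m) (u m x0 l) x0 = 0.
Proof.
  rewrite dot_u. destruct (Nat.ltb_spec l m); auto. unfold u.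
  destruct (Nat.ltb_spec l m); try lia.
  destruct (Rlt_dec 0 (rr x0 l)).
  - rewrite Nat.eqb_refl. destruct (Nat.eqb_spec (2*l+1) (2*l)); try lia. rewrite Nat.eqb_refl. field. lra.
  - destruct (rr_zero x0 l n) as [H1 H2]. rewrite H1, H2. ring.
Qed.

Definition Sk m x0 (k : nat) (v : vec) : Prop := forall l, (k <= l)%nat -> dot (2*m) (u m x0 l) v = 0.

Lemma Sk_mono m x0 k k' v : (k <= k')%nat -> Sk m x0 k v -> Sk m x0 k' v.
Proof. intros H Hs l Hl. apply Hs. lia. Qed.

Lemma Sk_vadd m x0 k x y : Sk m x0 k x -> Sk m x0 k y -> Sk m x0 k (vadd x y).
Proof. intros Hx Hy l Hl. rewrite dot_add_r, Hx, Hy; auto; ring. Qed.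
Lemma Sk_vscal m x0 k a x : Sk m x0 k x -> Sk m x0 k (vscal a x).
Proof. intros Hx l Hl. rewrite dot_scal_r, Hx; auto; ring. Qed.
Lemma Sk_vzero m x0 k : Sk m x0 k vzero.
Proof. intros l Hl. apply dot_zero_r. Qed.

Lemma Sk_lincomb m x0 k cs vs : (forall v, In v vs -> Sk m x0 k v) -> Sk m x0 k (lincomb cs vs).
Proof.
  revert vs. induction cs; intros vs H; simpl. apply Sk_vzero.
  destruct vs. apply Sk_vzero. apply Sk_vadd. apply Sk_vscal, H; simpl; auto.
  apply IHcs. intros; apply H; simpl; auto.
Qed.

Lemma Sk_vsum m x0 k P c w : (forall p, (p < P)%nat -> c p = 0 \/ Sk m x0 k (w p)) -> Sk m x0 k (vsum P c w).
Proof.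
  intros H l Hl. rewrite dot_vsum_r. rewrite <- (sumd_zero P). apply sumd_ext. intros p Hp.
  destruct (H p Hp) as [H1|H1]. rewrite H1; ring. rewrite H1; auto; ring.
Qed.

Lemma Sk_x0 m x0 : Sk m x0 0 x0.
Proof. intros l _. apply u_x0. Qed.

Definition progress d m x0 C (k k' : nat) :=
  forall x, Sk m x0 k x -> forall p, (p < cP C)%nat -> coef d C x p = 0 \/ Sk m x0 k' (cw C p).

Lemma Grad_progress m x0 C k k' x : progress (2*m) m x0 C k k' -> Sk m x0 k x ->
  Sk m x0 k' (Grad (2*m) C x).
Proof. intros H Hx. apply Sk_vsum. intros p Hp. apply H; auto. Qed.

Lemma Prox_progress m x0 C k k' g x : (k <= k')%nat -> progress (2*m) m x0 C k k' -> Sk m x0 k x ->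
  Sk m x0 k' (Prox (2*m) C g x).
Proof.
  intros Hk H Hx. unfold Prox. apply Sk_vadd.
  - exact (Sk_mono m x0 k k' x Hk Hx).
  - apply Sk_vsum. intros p Hp.
    destruct (H x Hx p Hp) as [H0|H0].
    + left. unfold pc. rewrite H0. unfold Rdiv. ring.
    + right; auto.
Qed.

Fixpoint cnt (H : nat -> bool) (l : list nat) : nat :=
  match l with [] => O | i :: l' => ((if H i then 1 else 0) + cnt H l')%nat end.

Definition bI (b : bool) : nat := if b then 1%nat else 0%nat.

Section Inv.
Variable m : nat.
Variable A : pifo.
Variable comps : nat -> comp.
Variable H : nat -> bool.
Let d := (2 * m)%nat.
Let x0 := px0 A.
Let f := fun i => Phi d (comps i).
Let gf := fun i => Grad d (comps i).
Let prox := fun i g x => Prox d (comps i) g x.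

Hypothesis Hpn : forall h, h <> [] -> in_span (span_set A h) (pnext A h).
Hypothesis Hprog : forall i k, progress d m x0 (comps i) k (bI (H i) + k).

Lemma inv_hist is :
  Sk m x0 (cnt H is) (xof A (hist A f gf prox is)) /\
  forall v, In v (span_set A (hist A f gf prox is)) -> Sk m x0 (cnt H is) v.
Proof.
  induction is as [|i is' IH].
  - simpl. split. apply Sk_x0. unfold span_set. simpl. tauto.
  - destruct IH as [IH1 IH2].
    set (h' := hist A f gf prox is') in *.
    assert (Hk : (cnt H is' <= cnt H (i :: is'))%nat) by (simpl; lia).
    assert (Hall : forall v, In v (span_set A (hist A f gf prox (i :: is'))) -> Sk m x0 (cnt H (i :: is')) v).
    { intros v Hv. simpl in Hv. fold h' in Hv. unfold span_set in Hv.
      assert (Hold : forall v, In v (map (xof A) (tails h')) \/ In v (map ograd h') \/ In v (map oprox h') -> Sk m x0 (cnt H (i :: is')) v).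
      { intros w Hw. eapply Sk_mono; [exact Hk|]. apply IH2. unfold span_set. rewrite !in_app_iff. tauto. }
      simpl in Hv. repeat (rewrite in_app_iff in Hv; simpl in Hv).
      destruct Hv as [Hv|[Hv|[Hv|[Hv|[Hv|Hv]]]]].
      - subst. eapply Sk_mono; eauto.
      - apply Hold; auto.
      - subst. replace (cnt H (i :: is')) with (bI (H i) + cnt H is')%nat by (simpl; unfold bI; destruct (H i); lia).
        apply (Grad_progress m x0 (comps i) (cnt H is')); auto.
      - apply Hold; auto.
      - subst. replace (cnt H (i :: is')) with (bI (H i) + cnt H is')%nat by (simpl; unfold bI; destruct (H i); lia).
        apply (Prox_progress m x0 (comps i) (cnt H is')); auto; lia.
      - apply Hold; auto. }
    split; auto.
    simpl. fold h'. destruct (Hpn (mkobs i (f i (xof A h')) (gf i (xof A h')) (prox i (pgam A (S (length is'))) (xof A h')) :: h')) as [cs [_ Hcs]].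
    discriminate. rewrite Hcs. apply Sk_lincomb. intros v Hv. apply Hall. simpl. fold h'. auto.
Qed.
End Inv.

Lemma expect_mono n p t G1 G2 : (forall j, (j < n)%nat -> 0 <= p j) -> (forall l, G1 l <= G2 l) ->
  expect n p t G1 <= expect n p t G2.
Proof.
  revert G1 G2. induction t; intros G1 G2 Hp HG; simpl; auto.
  apply sumd_le. intros j Hj. apply Rmult_le_compat_l; auto.
Qed.

Lemma expect_ext n p t G1 G2 : (forall l, G1 l = G2 l) -> expect n p t G1 = expect n p t G2.
Proof.
  revert G1 G2. induction t; intros G1 G2 HG; simpl; auto.
  apply sumd_ext. intros j _. f_equal. apply IHt. auto.
Qed.

Lemma expect_lin n p t Hd al sg : sumd n p = 1 ->
  expect n p t (fun l => al - sg * INR (cnt Hd l)) =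
  al - sg * INR t * sumd n (fun j => p j * INR (bI (Hd j))).
Proof.
  intros Hs. revert al. induction t; intros al; simpl expect. simpl; lra.
  rewrite (sumd_ext n _ (fun j => (al - sg * INR t * sumd n (fun j => p j * INR (bI (Hd j)))) * p j - sg * (p j * INR (bI (Hd j))))).
  2:{ intros j Hj. rewrite (expect_ext n p t _ (fun l => (al - sg * INR (bI (Hd j))) - sg * INR (cnt Hd l))).
      rewrite IHt. ring.
      intros l. simpl cnt. rewrite plus_INR. unfold bI. destruct (Hd j); ring. }
  rewrite sumd_sub, !sumd_scal. rewrite S_INR, Hs. ring.
Qed.

Lemma favg_convex n d comps : (1 <= n)%nat -> (forall i, valid_comp d (comps i)) ->
  convex_on d (favg n (fun i => Phi d (comps i))).
Proof.
  intros Hn HV x y a _ _ Ha. unfold favg.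
  assert (0 < / INR n) by (apply Rinv_0_lt_compat, lt_0_INR; lia).
  replace (a * (/ INR n * sumd n (fun i => Phi d (comps i) x)) + (1 - a) * (/ INR n * sumd n (fun i => Phi d (comps i) y)))
    with (/ INR n * (sumd n (fun i => a * Phi d (comps i) x + (1-a) * Phi d (comps i) y))).
  2:{ rewrite sumd_add, !sumd_scal. ring. }
  apply Rmult_le_compat_l; [lra|]. apply sumd_le. intros. apply Phi_convex; auto.
Qed.

Lemma assemble n m A comps H L B eps (xs : vec) al sg T :
  (2 <= n)%nat -> valid_pifo n (2*m) A ->
  (forall i, valid_comp (2*m) (comps i)) ->
  avg_smooth n (2*m) (fun i => Grad (2*m) (comps i)) L ->
  (forall i k, progress (2*m) m (px0 A) (comps i) k (bI (H i) + k)) ->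
  inR (2*m) xs ->
  (forall y, favg n (fun i => Phi (2*m) (comps i)) xs <= favg n (fun i => Phi (2*m) (comps i)) y) ->
  norm (2*m) (vsub (px0 A) xs) <= B ->
  (forall k x, Sk m (px0 A) k x -> favg n (fun i => Phi (2*m) (comps i)) x - favg n (fun i => Phi (2*m) (comps i)) xs >= al - sg * INR k) ->
  (forall t : nat, INR t <= T -> al - sg * INR t * sumd n (fun j => pp A j * INR (bI (H j))) >= eps) ->
  exists (f : nat -> vec -> R) (gf : nat -> vec -> vec)
             (prox : nat -> R -> vec -> vec),
        (forall i x, (i < n)%nat -> inR (2*m) x -> has_grad (2*m) (f i) x (gf i x)) /\
        (forall i gamma x, (i < n)%nat -> 0 < gamma -> inR (2*m) x ->
            is_prox (2*m) (f i) gamma x (prox i gamma x)) /\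
        avg_smooth n (2*m) gf L /\
        convex_on (2*m) (favg n f) /\
        exists xs : vec,
          inR (2*m) xs /\
          (forall y, inR (2*m) y -> favg n f xs <= favg n f y) /\
          norm (2*m) (vsub (px0 A) xs) <= B /\
          forall t : nat,
            INR t <= T ->
            expect n (pp A) t
              (fun is => favg n f (xof A (hist A f gf prox is)))
              - favg n f xs >= eps.
Proof.
  intros Hn HA HV HS HP Hxs Hmin Hnorm Hgap Ht.
  exists (fun i => Phi (2*m) (comps i)), (fun i => Grad (2*m) (comps i)), (fun i g x => Prox (2*m) (comps i) g x).
  split; [intros; apply grad_ok; auto|].
  split; [intros; apply prox_ok; auto|].
  split; auto.
  split; [apply favg_convex; auto; lia|].
  exists xs. split; auto. split; auto. split; auto.
  intros t HtT. destruct HA as [Hp [Hs [_ [_ Hpn]]]].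
  set (F := fun i => Phi (2*m) (comps i)).
  apply Rle_ge.
  apply Rle_trans with (expect n (pp A) t (fun is => (favg n F xs + al) - sg * INR (cnt H is)) - favg n F xs).
  - rewrite expect_lin by auto. specialize (Ht t HtT). lra.
  - apply Rplus_le_compat_r. apply expect_mono; auto. intros l.
    destruct (inv_hist m A comps H Hpn HP l) as [Hx _].
    specialize (Hgap _ _ Hx). unfold F. lra.
Qed.

From Stdlib Require Import ZArith.

Lemma pair_exists n p : (2 <= n)%nat -> (forall j, (j < n)%nat -> 0 <= p j) -> sumd n p = 1 ->
  exists jA jB, (jA < n)%nat /\ (jB < n)%nat /\ jA <> jB /\ p jA + p jB <= 2 / INR n.
Proof.
  intros Hn Hp Hs.
  set (nx := fun j => if (S j <? n)%nat then S j else O).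
  assert (E : sumd n (fun j => p (nx j)) = 1).
  { destruct n as [|n']; [lia|]. rewrite <- Hs.
    change (sumd (S n') (fun j => p (nx j))) with (sumd n' (fun j => p (nx j)) + p (nx n')).
    rewrite (sumd_shift n' p).
    assert (nx n' = O) as ->. { unfold nx. destruct (Nat.ltb_spec (S n') (S n')); auto; lia. }
    rewrite (sumd_ext n' _ (fun j => p (S j))). lra. intros k Hk. unfold nx. destruct (Nat.ltb_spec (S k) (S n')); auto; lia. }
  destruct (sumd_avg n (fun j => p j + p (nx j))) as [j [Hj Hle]]; [lia|].
  rewrite sumd_add, E, Hs in Hle.
  exists j, (nx j). split; auto. unfold nx in *. destruct (Nat.ltb_spec (S j) n); repeat split; try lia; lra.
Qed.

Lemma floor_exists x : 0 <= x -> exists M : nat, INR M <= x < INR M + 1.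
Proof.
  intros Hx. destruct (archimed x) as [H1 H2].
  assert (0 <= up x)%Z. { apply le_IZR. simpl. lra. }
  set (N := Z.to_nat (up x)).
  assert (HN : x < INR N). { unfold N. rewrite INR_IZR_INZ, Z2Nat.id; auto. }
  clear H1 H2 H. induction N.
  - simpl in HN. lra.
  - destruct (Rle_lt_dec (INR N) x).
    + exists N. rewrite S_INR in HN. lra.
    + apply IHN; auto.
Qed.

Lemma rpow_facts n : (1 <= n)%nat ->
  0 < Rpower (INR n) (-(1/4)) /\
  Rpower (INR n) (3/4) = INR n * Rpower (INR n) (-(1/4)) /\
  Rpower (INR n) (-(1/4)) ^ 2 * sqrt (INR n) = 1.
Proof.
  intros Hn. assert (0 < INR n) by (apply lt_0_INR; lia).
  split. { unfold Rpower. apply exp_pos. }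
  split. { replace (3/4) with (1 + -(1/4)) by field. rewrite Rpower_plus, Rpower_1; auto. }
  rewrite <- Rpower_sqrt by auto. simpl. rewrite Rmult_1_r, <- !Rpower_plus.
  replace (-(1/4) + -(1/4) + /2) with 0 by field. apply Rpower_O; auto.
Qed.

Definition comps1 (n : nat) (x0 : vec) (jA : nat) (L B : R) (i : nat) : comp :=
  mkcomp 1 (fun _ => u 1 x0 0) (fun _ => L) (fun _ => if (i =? jA)%nat then INR n * L * B else 0).

Lemma sumd_ind n j c : (j < n)%nat -> sumd n (fun i => if (i =? j)%nat then c else 0) = c.
Proof.
  intros Hj. rewrite (sumd_single n _ j); auto. rewrite Nat.eqb_refl; auto.
  intros q Hq Hqj. destruct (Nat.eqb_spec q j); auto; lia.
Qed.

Lemma favg1 n x0 jA L B x : (1 <= n)%nat -> (jA < n)%nat ->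
  favg n (fun i => Phi (2*1) (comps1 n x0 jA L B i)) x =
  L / 2 * (dot (2*1) (u 1 x0 0) x)^2 - L * B * dot (2*1) (u 1 x0 0) x.
Proof.
  intros Hn Hj. unfold favg, Phi, comps1. simpl cP. simpl cw. simpl ca. simpl cb.
  set (z := dot (2*1) (u 1 x0 0) x).
  rewrite (sumd_ext n _ (fun i => L/2 * z^2 - z * (if (i =? jA)%nat then INR n * L * B else 0))).
  2:{ intros. simpl. ring. }
  rewrite sumd_sub, (sumd_scal n z), sumd_ind, sumd_const by auto.
  assert (0 < INR n) by (apply lt_0_INR; lia). field. lra.
Qed.

Lemma case1 n L B eps A jA T : (2 <= n)%nat -> 0 < L -> 0 < B -> 0 < eps -> eps <= L * B^2 / 4 ->
  valid_pifo n (2*1) A -> (jA < n)%nat -> T * pp A jA <= 1/2 ->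
  exists (f : nat -> vec -> R) (gf : nat -> vec -> vec)
             (prox : nat -> R -> vec -> vec),
        (forall i x, (i < n)%nat -> inR (2*1) x -> has_grad (2*1) (f i) x (gf i x)) /\
        (forall i gamma x, (i < n)%nat -> 0 < gamma -> inR (2*1) x ->
            is_prox (2*1) (f i) gamma x (prox i gamma x)) /\
        avg_smooth n (2*1) gf L /\
        convex_on (2*1) (favg n f) /\
        exists xs : vec,
          inR (2*1) xs /\
          (forall y, inR (2*1) y -> favg n f xs <= favg n f y) /\
          norm (2*1) (vsub (px0 A) xs) <= B /\
          forall t : nat,
            INR t <= T ->
            expect n (pp A) t
              (fun is => favg n f (xof A (hist A f gf prox is)))
              - favg n f xs >= eps.
Proof.
  intros Hn HL HB He HeL HA Hj HT.
  set (x0 := px0 A). set (U := u 1 x0 0).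
  assert (HUU : dot (2*1) U U = 1). { unfold U. rewrite du. reflexivity. }
  assert (HUx0 : dot (2*1) U x0 = 0). { apply u_x0. }
  set (xs := vadd x0 (vscal B U)).
  assert (Hzs : dot (2*1) U xs = B). { unfold xs. rewrite dot_add_r, dot_scal_r, HUx0, HUU. ring. }
  assert (Hn1 : (1 <= n)%nat) by lia.
  assert (Hpj : 0 <= pp A jA). { destruct HA as [Hp _]. apply Hp; auto. }
  apply (assemble n 1 A (comps1 n x0 jA L B) (fun i => (i =? jA)%nat) L B eps xs (L*B^2/2) (L*B^2/2) T); auto.
  - intros i. split.
    + intros p Hp. simpl in Hp. simpl. split. exact (u_inR 1 x0 0). lra.
    + intros p q Hp Hq Hpq. simpl in *. lia.
  - intros x y _ _. unfold avg_smooth.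
    apply Rle_trans with (/ INR n * sumd n (fun i => 1^2 * L^2 * norm2 (2*1) (vsub x y))).
    + apply Rmult_le_compat_l. apply Rlt_le, Rinv_0_lt_compat, lt_0_INR; lia.
      apply sumd_le. intros i Hi. apply smooth_comp.
      * split. intros p Hp. simpl in Hp. simpl. split. exact (u_inR 1 x0 0). lra. intros p q Hp Hq Hpq. simpl in *. lia.
      * intros p Hp. simpl. assert (E1 : norm2 2 (u 1 x0 0) = 1) by exact HUU. rewrite E1. lra.
    + rewrite sumd_const. assert (0 < INR n) by (apply lt_0_INR; lia). right. field. lra.
  - intros i k x Hx p Hp. simpl in Hp. unfold comps1, coef; cbn [cw ca cb].
    destruct (Nat.eqb_spec i jA).
    + right. intros l Hl. simpl in Hl. rewrite du. destruct (Nat.eqb_spec l 0); simpl; auto; lia.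
    + destruct k as [|k].
      * left. unfold x0. rewrite (Hx 0%nat) by lia. ring.
      * right. intros l Hl. rewrite du. destruct (Nat.eqb_spec l 0); simpl; auto; lia.
  - apply inR_vadd. destruct HA as [_ [_ [H0 _]]]. exact H0. intros k Hk. unfold vscal. unfold U. rewrite (u_inR 1 x0 0 k Hk). ring.
  - intros y. rewrite !favg1 by auto. fold U. rewrite Hzs. set (z := dot (2*1) U y).
    assert (0 <= L * (z - B)^2) by (apply Rmult_le_pos; [lra|apply pow2_ge_0]). nra.
  - assert (E : norm2 (2*1) (vsub (px0 A) xs) = B^2).
    { rewrite (norm2_ext _ _ (vscal (-B) U)). unfold norm2. rewrite dot_scal_l, dot_scal_r. fold (norm2 (2*1) U).
      unfold norm2. rewrite HUU. ring. intros k. unfold xs, vsub, vadd, vscal. fold x0. ring. }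
    unfold norm. rewrite E. rewrite sqrt_pow2; lra.
  - intros k x Hx. rewrite !favg1 by auto. fold U. rewrite Hzs. set (z := dot (2*1) U x).
    destruct k as [|k].
    + assert (z = 0) by (apply Hx; lia). rewrite H. simpl. lra.
    + rewrite S_INR. pose proof (pos_INR k).
      assert (0 <= L * (z - B)^2) by (apply Rmult_le_pos; [lra|apply pow2_ge_0]).
      assert (0 <= L * B^2 * INR k) by (apply Rmult_le_pos; [nra|lra]). nra.
  - intros t Ht.
    assert (E : sumd n (fun j => pp A j * INR (bI (j =? jA)%nat)) = pp A jA).
    { rewrite (sumd_ext n _ (fun j => if (j =? jA)%nat then pp A jA else 0)). apply sumd_ind; auto.
      intros j _. unfold bI. destruct (Nat.eqb_spec j jA); [subst j|]; simpl; ring. }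
    rewrite E. pose proof (pos_INR t).
    assert (INR t * pp A jA <= 1/2). { apply Rle_trans with (T * pp A jA); auto. apply Rmult_le_compat_r; auto. }
    assert (0 < L * B^2) by (apply Rmult_lt_0_compat; nra). nra.
Qed.

Definition Qf (m : nat) (beta : R) (z : nat -> R) : R :=
  z O ^ 2 - 2 * beta * z O + sumd m (fun i => (z i - z (S i))^2).

Lemma Qf_ext m beta z z' : (forall l, (l <= m)%nat -> z l = z' l) -> Qf m beta z = Qf m beta z'.
Proof.
  intros H. unfold Qf. rewrite (H O) by lia. f_equal. apply sumd_ext. intros. rewrite !H by lia. auto.
Qed.

Lemma tele K (z : nat -> R) : sumd K (fun i => z i - z (S i)) = z O - z K.
Proof. induction K; simpl; [ring|]. rewrite IHK. ring. Qed.

Lemma chain_lb m beta z K : (K <= m)%nat -> z K = 0 ->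
  Qf m beta z >= - beta^2 * INR K / (INR K + 1).
Proof.
  intros HK Hz. unfold Qf.
  set (S2 := sumd m (fun i => (z i - z (S i))^2)).
  destruct K as [|K].
  - simpl in Hz. rewrite Hz. simpl. assert (0 <= S2) by (apply sumd_nonneg; intros; apply pow2_ge_0). lra.
  - assert (HS : sumd (S K) (fun i => (z i - z (S i))^2) <= S2).
    { apply sumd_mono_len; auto. intros; apply pow2_ge_0. }
    pose proof (sumd_sq_bound (S K) (fun i => z i - z (S i))) as Hb.
    rewrite tele, Hz in Hb. set (k := INR (S K)) in *. assert (Hk : 0 < k) by (apply lt_0_INR; lia).
    set (s := z O) in *. clearbody S2 k s.
    assert (Hs2 : (s - 0)^2 <= k * S2) by nra.
    assert (E : 0 <= ((k+1)*s - beta * k)^2) by apply pow2_ge_0.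
    assert (H1 : s^2 * (k + 1) <= k * (s^2 + S2)) by nra.
    apply Rle_ge. apply Rmult_le_reg_r with (k * (k+1)); [nra|].
    replace (- beta ^ 2 * k / (k + 1) * (k * (k + 1))) with (- beta^2 * k^2) by (field; lra).
    nra.
Qed.

Definition zs (m : nat) (beta : R) (l : nat) : R := beta * (INR m - INR l) / (INR m + 1).

Lemma Qf_star m beta : Qf m beta (zs m beta) = - beta^2 * INR m / (INR m + 1).
Proof.
  unfold Qf. rewrite (sumd_ext m _ (fun _ => (beta / (INR m + 1))^2)).
  2:{ intros. unfold zs. rewrite S_INR. pose proof (pos_INR m). field. lra. }
  rewrite sumd_const. unfold zs. simpl INR. pose proof (pos_INR m). field. lra.
Qed.

Lemma tangent (k m : R) : 0 <= k -> 0 <= m ->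
  m / (m+1) - k / (k+1) >= 3 / (m+1) - 4 * (k+1) / (m+1)^2.
Proof.
  intros Hk Hm. apply Rle_ge.
  assert (E : m / (m+1) - k/(k+1) - (3 / (m+1) - 4 * (k+1) / (m+1)^2) = (m + 1 - 2*(k+1))^2 / ((k+1) * (m+1)^2)) by (field; lra).
  assert (0 <= (m + 1 - 2*(k+1))^2 / ((k+1) * (m+1)^2)).
  { unfold Rdiv. apply Rmult_le_pos. apply pow2_ge_0. apply Rlt_le, Rinv_0_lt_compat. apply Rmult_lt_0_compat; [lra|]. nra. }
  lra.
Qed.

Definition ia (p : nat) : nat := if (p =? 0)%nat then 0%nat else (2*p-1)%nat.
Definition ja (m p : nat) : nat := if (p =? 0)%nat then m else (2*p)%nat.

Definition CA (n M m : nat) (x0 : vec) (lam beta : R) : comp :=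
  mkcomp (S M) (fun p => vsub (u m x0 (ia p)) (u m x0 (ja m p))) (fun _ => INR n * lam)
    (fun p => if (p =? 0)%nat then INR n * lam * beta else 0).
Definition CB (n M m : nat) (x0 : vec) (lam : R) : comp :=
  mkcomp M (fun p => vsub (u m x0 (2*p)) (u m x0 (2*p+1))) (fun _ => INR n * lam) (fun _ => 0).
Definition C0 : comp := mkcomp 0 (fun _ => vzero) (fun _ => 0) (fun _ => 0).

Definition comps2 n M m x0 lam beta jA jB (i : nat) : comp :=
  if (i =? jA)%nat then CA n M m x0 lam beta else if (i =? jB)%nat then CB n M m x0 lam else C0.

Ltac dsimpl := repeat match goal with
  | |- context [Nat.eqb ?a ?b] => destruct (Nat.eqb_spec a b)
  | |- context [Nat.ltb ?a ?b] => destruct (Nat.ltb_spec a b)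
  end; cbn [andb]; try lia; try lra.

Lemma dot_ee m x0 i j i' j' : dot (2*m) (vsub (u m x0 i) (u m x0 j)) (vsub (u m x0 i') (u m x0 j')) =
  (if andb (i =? i')%nat (i <? m)%nat then 1 else 0) - (if andb (i =? j')%nat (i <? m)%nat then 1 else 0)
  - (if andb (j =? i')%nat (j <? m)%nat then 1 else 0) + (if andb (j =? j')%nat (j <? m)%nat then 1 else 0).
Proof. rewrite dot_sub_l, !dot_sub_r, !du. ring. Qed.

Lemma Sk_e m x0 k i j : (i < k)%nat -> ((j < k)%nat \/ (m <= j)%nat) -> Sk m x0 k (vsub (u m x0 i) (u m x0 j)).
Proof. intros Hi Hj l Hl. rewrite dot_sub_r, !du. destruct Hj; dsimpl. Qed.

Lemma zq_e_zero m x0 k x i j : Sk m x0 k x -> (k <= i)%nat -> (k <= j)%nat -> dot (2*m) (vsub (u m x0 i) (u m x0 j)) x = 0.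
Proof. intros Hx Hi Hj. rewrite dot_sub_l, Hx, Hx by auto. ring. Qed.

Section C2.
Variables (n M m : nat) (x0 : vec) (lam beta : R) (jA jB : nat).
Hypothesis Hm : m = (2 * M)%nat.
Hypothesis HM : (1 <= M)%nat.
Hypothesis Hlam : 0 <= lam.
Hypothesis HjAB : jA <> jB.

Lemma valid_CA : valid_comp (2*m) (CA n M m x0 lam beta).
Proof.
  split.
  - intros p Hp. split. apply inR_vsub; apply u_inR. simpl. apply Rmult_le_pos; auto. apply pos_INR.
  - intros p q Hp Hq Hpq. simpl in Hp, Hq. simpl cw. rewrite dot_ee. unfold ia, ja. destruct (Nat.eqb_spec p 0); destruct (Nat.eqb_spec q 0); dsimpl.
Qed.

Lemma valid_CB : valid_comp (2*m) (CB n M m x0 lam).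
Proof.
  split.
  - intros p Hp. split. apply inR_vsub; apply u_inR. simpl. apply Rmult_le_pos; auto. apply pos_INR.
  - intros p q Hp Hq Hpq. simpl in Hp, Hq. simpl cw. rewrite dot_ee. dsimpl.
Qed.

Lemma valid_C0 d : valid_comp d C0.
Proof. split; intros; simpl in *; lia. Qed.

Lemma valid_comps2 i : valid_comp (2*m) (comps2 n M m x0 lam beta jA jB i).
Proof. unfold comps2. destruct (i =? jA)%nat. apply valid_CA. destruct (i =? jB)%nat. apply valid_CB. apply valid_C0. Qed.

Lemma N_CA p : (p < cP (CA n M m x0 lam beta))%nat -> ca (CA n M m x0 lam beta) p <= INR n * lam /\ 0 < norm2 (2*m) (cw (CA n M m x0 lam beta) p) <= 2.
Proof.
  intros Hp. simpl in Hp. split. simpl; lra. unfold norm2. simpl cw. rewrite dot_ee. unfold ia, ja. destruct (Nat.eqb_spec p 0); dsimpl.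
Qed.

Lemma N_CB p : (p < cP (CB n M m x0 lam))%nat -> ca (CB n M m x0 lam) p <= INR n * lam /\ 0 < norm2 (2*m) (cw (CB n M m x0 lam) p) <= 2.
Proof.
  intros Hp. simpl in Hp. split. simpl; lra. unfold norm2. simpl cw. rewrite dot_ee. dsimpl.
Qed.

Definition Hh (i : nat) : bool := orb (i =? jA)%nat (i =? jB)%nat.

Lemma progress2 i k : progress (2*m) m x0 (comps2 n M m x0 lam beta jA jB i) k (bI (Hh i) + k).
Proof.
  intros x Hx p Hp. unfold comps2, Hh in *. destruct (Nat.eqb_spec i jA).
  - simpl in Hp. simpl bI. unfold coef. simpl cw; simpl ca; simpl cb.
    destruct (Nat.eqb_spec p 0).
    + right. subst p. unfold ia, ja; simpl. apply Sk_e; lia.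
    + destruct (Nat.le_gt_cases (2*p) k).
      * right. unfold ia, ja. destruct (Nat.eqb_spec p 0); try lia. apply Sk_e; lia.
      * left. unfold ia, ja. destruct (Nat.eqb_spec p 0); try lia. rewrite (zq_e_zero m x0 k) by (auto; lia). ring.
  - destruct (Nat.eqb_spec i jB).
    + simpl in Hp. simpl bI. unfold coef. simpl cw; simpl ca; simpl cb.
      destruct (Nat.le_gt_cases (2*p+1) k).
      * right. apply Sk_e; lia.
      * left. rewrite (zq_e_zero m x0 k) by (auto; lia). ring.
    + simpl in Hp. lia.
Qed.

End C2.

Lemma zq_m m x0 x : dot (2*m) (u m x0 m) x = 0.
Proof. rewrite dot_u. rewrite Nat.ltb_irrefl. auto. Qed.

Lemma favg2 n M m x0 lam beta jA jB x : m = (2*M)%nat -> (1 <= n)%nat -> (jA < n)%nat -> (jB < n)%nat -> jA <> jB ->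
  favg n (fun i => Phi (2*m) (comps2 n M m x0 lam beta jA jB i)) x =
  lam / 2 * Qf m beta (fun l => dot (2*m) (u m x0 l) x).
Proof.
  intros Hm Hn HA HB HAB. unfold favg.
  rewrite (sumd_two n _ jA jB) by (auto; intros k Hk H1 H2; unfold comps2; destruct (Nat.eqb_spec k jA); try lia; destruct (Nat.eqb_spec k jB); try lia; reflexivity).
  unfold comps2. rewrite Nat.eqb_refl. destruct (Nat.eqb_spec jB jA); try lia. rewrite Nat.eqb_refl.
  set (z := fun l => dot (2*m) (u m x0 l) x).
  assert (Hz : forall i j, dot (2*m) (vsub (u m x0 i) (u m x0 j)) x = z i - z j).
  { intros. unfold z. apply dot_sub_l. }
  assert (Hzm : z m = 0) by apply zq_m.
  unfold Phi at 1. cbn [cP cw ca cb CA]. rewrite sumd_shift.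
  unfold Phi. cbn [cP cw ca cb CB].
  rewrite !Hz.
  rewrite (sumd_ext M (fun j => _) (fun p => INR n * lam / 2 * (z (2*p+1)%nat - z (2*p+2)%nat)^2)).
  2:{ intros p Hp. rewrite Hz. unfold ia, ja. simpl (S p =? 0)%nat. cbv iota.
      replace (2 * S p - 1)%nat with (2*p+1)%nat by lia. replace (2 * S p)%nat with (2*p+2)%nat by lia. simpl; ring. }
  rewrite (sumd_ext M (fun p => INR n * lam / 2 * dot (2 * m) (vsub (u m x0 (2 * p)) (u m x0 (2 * p + 1))) x ^ 2 - 0 * dot (2 * m) (vsub (u m x0 (2 * p)) (u m x0 (2 * p + 1))) x) (fun p => INR n * lam / 2 * (z (2*p)%nat - z (2*p+1)%nat)^2)).
  2:{ intros p Hp. rewrite Hz. ring. }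
  unfold ia, ja. simpl (0 =? 0)%nat. cbv iota. rewrite Hzm.
  unfold Qf.
  assert (Hs : sumd m (fun i => (z i - z (S i))^2) = sumd M (fun p => (z (2*p)%nat - z (2*p+1)%nat)^2 + (z (2*p+1)%nat - z (2*p+2)%nat)^2)).
  { clearbody z. subst m. rewrite sumd_pairs. apply sumd_ext. intros p _.
    replace (S (2*p)) with (2*p+1)%nat by lia. replace (S (2*p+1)) with (2*p+2)%nat by lia. auto. }
  rewrite Hs, sumd_add, !sumd_scal.
  assert (0 < INR n) by (apply lt_0_INR; lia). field. lra.
Qed.

Lemma zq_xs m M x0 beta l : m = (2*M)%nat -> (l <= m)%nat ->
  dot (2*m) (u m x0 l) (vadd x0 (vsum m (zs m beta) (u m x0))) = zs m beta l.
Proof.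
  intros Hm Hl. rewrite dot_add_r, u_x0, dot_vsum_r.
  destruct (Nat.lt_ge_cases l m).
  - rewrite (sumd_single m _ l); auto. rewrite du. rewrite Nat.eqb_refl. destruct (Nat.ltb_spec l m); try lia. simpl. ring.
    intros q Hq Hql. rewrite du. destruct (Nat.eqb_spec l q); try lia. simpl. ring.
  - assert (l = m) by lia. subst l. rewrite Rplus_0_l. transitivity 0.
    + rewrite <- (sumd_zero m). apply sumd_ext.
      intros. rewrite du. rewrite Nat.ltb_irrefl. destruct (m =? k)%nat; simpl; ring.
    + unfold zs. field. pose proof (pos_INR m). lra.
Qed.

Lemma case2 n M m L B eps A jA jB lam beta T :
  m = (2*M)%nat -> (1 <= M)%nat -> (2 <= n)%nat -> 0 < L -> 0 < B -> 0 < eps ->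
  valid_pifo n (2*m) A -> (jA < n)%nat -> (jB < n)%nat -> jA <> jB ->
  pp A jA + pp A jB <= 2 / INR n ->
  0 < lam -> lam^2 * (8 * INR n) = L^2 -> 0 <= beta -> beta^2 * INR m <= B^2 ->
  (forall t : nat, INR t <= T -> lam/2*beta^2*(3/(INR m+1) - 4/(INR m+1)^2 - 4/(INR m+1)^2 * INR t * (2/INR n)) >= eps) ->
  exists (f : nat -> vec -> R) (gf : nat -> vec -> vec)
             (prox : nat -> R -> vec -> vec),
        (forall i x, (i < n)%nat -> inR (2*m) x -> has_grad (2*m) (f i) x (gf i x)) /\
        (forall i gamma x, (i < n)%nat -> 0 < gamma -> inR (2*m) x ->
            is_prox (2*m) (f i) gamma x (prox i gamma x)) /\
        avg_smooth n (2*m) gf L /\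
        convex_on (2*m) (favg n f) /\
        exists xs : vec,
          inR (2*m) xs /\
          (forall y, inR (2*m) y -> favg n f xs <= favg n f y) /\
          norm (2*m) (vsub (px0 A) xs) <= B /\
          forall t : nat,
            INR t <= T ->
            expect n (pp A) t
              (fun is => favg n f (xof A (hist A f gf prox is)))
              - favg n f xs >= eps.
Proof.
  intros Hm HM Hn HL HB He HA HjA HjB HAB Hp2 Hlam Hlam2 Hbeta Hbm HT.
  set (x0 := px0 A).
  set (xs := vadd x0 (vsum m (zs m beta) (u m x0))).
  assert (Hn1 : (1 <= n)%nat) by lia.
  assert (HnR : 0 < INR n) by (apply lt_0_INR; lia).
  assert (HmR : 0 < INR m) by (apply lt_0_INR; lia).
  assert (Hfx : forall x, favg n (fun i => Phi (2*m) (comps2 n M m x0 lam beta jA jB i)) x = lam / 2 * Qf m beta (fun l => dot (2*m) (u m x0 l) x)).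
  { intros. apply favg2; auto. }
  assert (Hfxs : favg n (fun i => Phi (2*m) (comps2 n M m x0 lam beta jA jB i)) xs = lam / 2 * (- beta^2 * INR m / (INR m + 1))).
  { rewrite Hfx, <- Qf_star. f_equal. apply Qf_ext. intros. apply zq_xs with M; auto. }
  assert (Hlow : forall y, Qf m beta (fun l => dot (2*m) (u m x0 l) y) >= - beta^2 * INR m / (INR m + 1)).
  { intros. apply chain_lb; auto. apply zq_m. }
  apply (assemble n m A (comps2 n M m x0 lam beta jA jB) (Hh jA jB) L B eps xs
     (lam/2*beta^2*(3/(INR m+1) - 4/(INR m+1)^2)) (lam/2*beta^2*(4/(INR m+1)^2)) T); auto.
  - intros i. apply (valid_comps2 n M m x0 lam beta jA jB); auto; lra.
  - intros x y _ _. unfold avg_smooth.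
    set (X := 2^2 * (INR n * lam)^2 * norm2 (2*m) (vsub x y)).
    apply Rle_trans with (/ INR n * sumd n (fun i => if (i =? jA)%nat then X else if (i =? jB)%nat then X else 0)).
    + apply Rmult_le_compat_l. apply Rlt_le, Rinv_0_lt_compat; auto.
      apply sumd_le. intros i Hi. unfold comps2. destruct (Nat.eqb_spec i jA).
      * apply smooth_comp. apply (valid_CA n M m x0 lam beta jA jB Hm HM ltac:(lra) HAB). apply (N_CA n M m x0 lam beta jA jB); auto.
      * destruct (Nat.eqb_spec i jB).
        -- apply smooth_comp. apply (valid_CB n M m x0 lam jA jB Hm HM ltac:(lra) HAB).
           apply (N_CB n M m x0 lam jA jB); auto.
        -- apply Rle_trans with (2^2 * 0^2 * norm2 (2*m) (vsub x y)).
           apply smooth_comp. split; intros; simpl in *; lia. intros p Hp. simpl in Hp. lia. right; ring.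
    + rewrite (sumd_two n _ jA jB); auto.
      2:{ intros k Hk H1 H2. destruct (Nat.eqb_spec k jA); try lia. destruct (Nat.eqb_spec k jB); try lia. auto. }
      rewrite Nat.eqb_refl. destruct (Nat.eqb_spec jB jA); try lia. rewrite Nat.eqb_refl.
      unfold X. replace (L^2) with (lam^2 * (8 * INR n)) by auto. right. field. lra.
  - intros i k. apply progress2; auto.
  - apply inR_vadd. destruct HA as [_ [_ [H0 _]]]. exact H0. apply inR_vsum. intros. apply u_inR.
  - intros y. rewrite Hfxs, Hfx. specialize (Hlow y). nra.
  - assert (E : norm2 (2*m) (vsub (px0 A) xs) = sumd m (fun p => zs m beta p ^ 2)).
    { rewrite (norm2_ext _ _ (vscal (-1) (vsum m (zs m beta) (u m x0)))).
      2:{ intros k. unfold xs, vsub, vadd, vscal. fold x0. ring. }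
      unfold norm2 at 1. rewrite dot_scal_l, dot_scal_r.
      replace (-1 * (-1 * dot (2*m) (vsum m (zs m beta) (u m x0)) (vsum m (zs m beta) (u m x0)))) with (norm2 (2*m) (vsum m (zs m beta) (u m x0))) by (unfold norm2; ring).
      rewrite norm2_vsum_orth.
      - apply sumd_ext. intros p Hp. unfold norm2. rewrite du, Nat.eqb_refl.
        destruct (Nat.ltb_spec p m); try lia. simpl. ring.
      - intros p q Hp Hq Hpq. rewrite du. destruct (Nat.eqb_spec p q); try lia. simpl; auto. }
    assert (E2 : norm2 (2*m) (vsub (px0 A) xs) <= B^2).
    { rewrite E. apply Rle_trans with (sumd m (fun _ => beta^2)).
      - apply sumd_le. intros p Hp. unfold zs.
        assert (0 <= INR p <= INR m) by (split; [apply pos_INR | apply le_INR; lia]).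
        assert (0 <= (INR m - INR p)/(INR m + 1) <= 1). { split. apply Rmult_le_pos. lra. apply Rlt_le, Rinv_0_lt_compat; lra.
          apply Rmult_le_reg_r with (INR m + 1); [lra|]. unfold Rdiv. rewrite Rmult_assoc, Rinv_l by lra. lra. }
        replace ((beta * (INR m - INR p) / (INR m + 1))^2) with (beta^2 * ((INR m - INR p)/(INR m + 1))^2) by (field; lra).
        assert (((INR m - INR p)/(INR m + 1))^2 <= 1) by nra.
        assert (0 <= beta^2) by apply pow2_ge_0. nra.
      - rewrite sumd_const. lra. }
    unfold norm. rewrite <- (sqrt_pow2 B) by lra. apply sqrt_le_1_alt. auto.
  - intros k x Hx. rewrite Hfx, Hfxs.
    assert (Hl0 : 0 <= lam / 2 * beta ^ 2) by (apply Rmult_le_pos; [lra|apply pow2_ge_0]).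
    destruct (Nat.le_gt_cases k m).
    + pose proof (chain_lb m beta (fun l => dot (2*m) (u m x0 l) x) k H (Hx k (le_n k))).
      pose proof (tangent (INR k) (INR m) (pos_INR k) (pos_INR m)).
      assert (lam/2 * (Qf m beta (fun l => dot (2*m) (u m x0 l) x)) - lam/2*(- beta ^ 2 * INR m / (INR m + 1))
         >= lam / 2 * beta^2 * (INR m / (INR m + 1) - INR k / (INR k + 1))).
      { apply Rle_ge. replace (lam / 2 * beta^2 * (INR m / (INR m + 1) - INR k / (INR k + 1))) with
          (lam/2 * (- beta^2 * INR k / (INR k + 1)) - lam/2*(- beta ^ 2 * INR m / (INR m + 1))).
        2:{ pose proof (pos_INR k). field. lra. }
        apply Rplus_le_compat_r. apply Rmult_le_compat_l; lra. }
      assert (lam / 2 * beta^2 * (INR m / (INR m + 1) - INR k / (INR k + 1)) >=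
              lam / 2 * beta^2 * (3 / (INR m + 1) - 4 * (INR k + 1) / (INR m + 1)^2)).
      { apply Rle_ge, Rmult_le_compat_l; lra. }
      assert (lam / 2 * beta^2 * (3 / (INR m + 1) - 4 * (INR k + 1) / (INR m + 1)^2) =
        lam / 2 * beta ^ 2 * (3 / (INR m + 1) - 4 / (INR m + 1) ^ 2) - lam / 2 * beta ^ 2 * (4 / (INR m + 1) ^ 2) * INR k) by (field; lra).
      lra.
    + specialize (Hlow x).
      assert (lam/2 * Qf m beta (fun l => dot (2*m) (u m x0 l) x) >= lam/2*(- beta^2 * INR m / (INR m + 1))).
      { apply Rle_ge, Rmult_le_compat_l; lra. }
      assert (INR m + 1 <= INR k) by (rewrite <- S_INR; apply le_INR; lia).
      assert (lam / 2 * beta ^ 2 * (3 / (INR m + 1) - 4 / (INR m + 1) ^ 2) - lam / 2 * beta ^ 2 * (4 / (INR m + 1) ^ 2) * INR k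
        = lam / 2 * beta ^ 2 * ((3 * (INR m + 1) - 4 * (INR k + 1)) / (INR m + 1)^2)) by (field; lra).
      assert ((3 * (INR m + 1) - 4 * (INR k + 1)) / (INR m + 1)^2 <= 0).
      { unfold Rdiv. assert (0 <= / (INR m + 1)^2) by (apply Rlt_le, Rinv_0_lt_compat; nra). nra. }
      assert (lam / 2 * beta ^ 2 * ((3 * (INR m + 1) - 4 * (INR k + 1)) / (INR m + 1)^2) <= 0).
      { nra. }
      lra.
  - intros t Ht. specialize (HT t Ht).
    assert (E : sumd n (fun j => pp A j * INR (bI (Hh jA jB j))) = pp A jA + pp A jB).
    { rewrite (sumd_two n _ jA jB); auto.
      - unfold Hh, bI. rewrite Nat.eqb_refl. simpl. rewrite Nat.eqb_refl. destruct (jB =? jA)%nat; simpl; ring.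
      - intros k Hk H1 H2. unfold Hh, bI. destruct (Nat.eqb_spec k jA); try lia. destruct (Nat.eqb_spec k jB); try lia. simpl. ring. }
    rewrite E.
    assert (0 <= lam / 2 * beta ^ 2 * (4 / (INR m + 1) ^ 2) * INR t).
    { apply Rmult_le_pos; [|apply pos_INR]. apply Rmult_le_pos. apply Rmult_le_pos; [lra|apply pow2_ge_0].
      apply Rmult_le_pos; [lra|]. apply Rlt_le, Rinv_0_lt_compat. nra. }
    assert (lam / 2 * beta ^ 2 * (4 / (INR m + 1) ^ 2) * INR t * (pp A jA + pp A jB) <=
            lam / 2 * beta ^ 2 * (4 / (INR m + 1) ^ 2) * INR t * (2 / INR n)) by (apply Rmult_le_compat_l; auto).
    assert (lam / 2 * beta ^ 2 * (3 / (INR m + 1) - 4 / (INR m + 1) ^ 2 - 4 / (INR m + 1) ^ 2 * INR t * (2 / INR n)) =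
      lam / 2 * beta ^ 2 * (3 / (INR m + 1) - 4 / (INR m + 1) ^ 2) - lam / 2 * beta ^ 2 * (4 / (INR m + 1) ^ 2) * INR t * (2 / INR n)) by ring.
    lra.
Qed.

Theorem theorem3p4 :
  exists c C : R, 0 < c /\ 0 < C /\
  forall (n : nat) (L B eps : R),
    (2 <= n)%nat -> 0 < L -> 0 < B -> 0 < eps -> eps <= L * B ^ 2 / 4 ->
    forall A : nat -> pifo, (forall d, valid_pifo n d (A d)) ->
    exists d : nat,
      INR d <= C * (1 + B * Rpower (INR n) (- (1 / 4)) * sqrt (L / eps)) /\
      exists (f : nat -> vec -> R) (gf : nat -> vec -> vec)
             (prox : nat -> R -> vec -> vec),
        (forall i x, (i < n)%nat -> inR d x -> has_grad d (f i) x (gf i x)) /\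
        (forall i gamma x, (i < n)%nat -> 0 < gamma -> inR d x ->
            is_prox d (f i) gamma x (prox i gamma x)) /\
        avg_smooth n d gf L /\
        convex_on d (favg n f) /\
        exists xs : vec,
          inR d xs /\
          (forall y, inR d y -> favg n f xs <= favg n f y) /\
          norm d (vsub (px0 (A d)) xs) <= B /\
          forall t : nat,
            INR t <= c * (INR n + B * Rpower (INR n) (3 / 4) * sqrt (L / eps)) ->
            expect n (pp (A d)) t
              (fun is => favg n f (xof (A d) (hist (A d) f gf prox is)))
              - favg n f xs >= eps.
Proof.
  exists (1/200), 2. split; [lra|]. split; [lra|].
  intros n L B eps Hn HL HB He HeL A HA.
  destruct (rpow_facts n ltac:(lia)) as [Hq [Hq34 Hqn]].
  set (q := Rpower (INR n) (-(1/4))) in *.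
  assert (HnR : 0 < INR n) by (apply lt_0_INR; lia).
  set (K := L / eps).
  assert (HK : 0 < K) by (unfold K; apply Rdiv_lt_0_compat; lra).
  set (s := sqrt K).
  assert (Hs : 0 < s) by (apply sqrt_lt_R0; auto).
  assert (Hs2 : s^2 = K) by (unfold s; rewrite <- Rsqr_pow2; apply Rsqr_sqrt; lra).
  set (r := B * q * s).
  assert (Hr : 0 < r) by (unfold r; apply Rmult_lt_0_compat; [apply Rmult_lt_0_compat|]; auto).
  rewrite Hq34.
  replace (1 / 200 * (INR n + B * (INR n * q) * s)) with (INR n * (1 + r) / 200) by (unfold r; field).
  destruct (Rlt_le_dec r 30) as [Hr30|Hr30].
  -
    exists (2*1)%nat. split. { simpl. lra. }
    destruct (HA (2*1)%nat) as [Hp [Hsum Hrest]].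
    destruct (pair_exists n (pp (A (2*1)%nat)) Hn Hp Hsum) as [jA [jB [HjA [HjB [Hne Hpp]]]]].
    apply (case1 n L B eps (A (2*1)%nat) jA (INR n * (1 + r) / 200)); auto.
    pose proof (Hp jB HjB).
    assert (pp (A (2*1)%nat) jA <= 2 / INR n) by lra.
    apply Rle_trans with (INR n * (1 + r) / 200 * (2 / INR n)).
    + apply Rmult_le_compat_l; auto. apply Rmult_le_pos. nra. lra.
    + replace (INR n * (1 + r) / 200 * (2 / INR n)) with ((1 + r)/100) by (field; lra). lra.
  -
    destruct (floor_exists (r/6) ltac:(lra)) as [M [HM1 HM2]].
    assert (HM5 : (5 <= M)%nat). { assert (4 < INR M) by lra. assert (4 < M)%nat. { apply INR_lt. simpl. lra. } lia. }
    set (m := (2*M)%nat).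
    assert (HmR : INR m = 2 * INR M) by (unfold m; rewrite mult_INR; simpl; ring).
    exists (2*m)%nat. split. { rewrite mult_INR, HmR. simpl. lra. }
    destruct (HA (2*m)%nat) as [Hp [Hsum Hrest]].
    destruct (pair_exists n (pp (A (2*m)%nat)) Hn Hp Hsum) as [jA [jB [HjA [HjB [Hne Hpp]]]]].
    set (w := sqrt (INR n)).
    assert (Hw : 0 < w) by (apply sqrt_lt_R0; lra).
    assert (Hw2 : w^2 = INR n) by (unfold w; rewrite <- Rsqr_pow2; apply Rsqr_sqrt; lra).
    set (e8 := sqrt 8).
    assert (He8 : 0 < e8) by (apply sqrt_lt_R0; lra).
    assert (He82 : e8^2 = 8) by (unfold e8; rewrite <- Rsqr_pow2; apply Rsqr_sqrt; lra).
    assert (He83 : e8 <= 3) by nra.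
    set (lam := L / (e8 * w)).
    assert (Hlam : 0 < lam) by (unfold lam; apply Rdiv_lt_0_compat; [lra|nra]).
    assert (HmR0 : 0 < INR m) by (rewrite HmR; assert (0 < INR M) by (apply lt_0_INR; lia); lra).
    set (beta := B / sqrt (INR m)).
    assert (Hsm : 0 < sqrt (INR m)) by (apply sqrt_lt_R0; lra).
    assert (Hsm2 : sqrt (INR m) ^ 2 = INR m) by (rewrite <- Rsqr_pow2; apply Rsqr_sqrt; lra).
    assert (Hb2 : beta^2 = B^2 / INR m) by (unfold beta; replace ((B / sqrt (INR m))^2) with (B^2 / sqrt (INR m)^2) by (field; lra); rewrite Hsm2; auto).
    apply (case2 n M m L B eps (A (2*m)%nat) jA jB lam beta (INR n * (1 + r) / 200)); auto; try lia.
    + unfold lam. replace (8 * INR n) with (e8^2 * w^2) by (rewrite He82, Hw2; ring). field. nra.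
    + unfold beta. apply Rlt_le, Rdiv_lt_0_compat; lra.
    + unfold beta. right. replace ((B / sqrt (INR m))^2) with (B^2 / sqrt (INR m)^2) by (field; lra). rewrite Hsm2. field. lra.
    + intros t Ht.
      set (mm := INR m) in *.
      assert (Ht2 : INR t * (2 / INR n) <= (1 + r) / 100).
      { apply Rle_trans with (INR n * (1 + r) / 200 * (2 / INR n)).
        apply Rmult_le_compat_r; auto. apply Rlt_le, Rdiv_lt_0_compat; lra.
        right. field. lra. }
      assert (Hmm1 : 4 + 4 * ((1 + r)/100) <= mm + 1) by lra.
      pose proof (pos_INR t).
      set (u2 := INR t * (2 / INR n)) in *.
      assert (Hu2 : 0 <= u2) by (unfold u2; apply Rmult_le_pos; [lra|apply Rlt_le, Rdiv_lt_0_compat; lra]).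
      assert (E1 : 3 / (mm + 1) - 4 / (mm + 1) ^ 2 - 4 / (mm + 1) ^ 2 * INR t * (2 / INR n) = (3 * (mm+1) - 4 - 4 * u2) / (mm+1)^2)
        by (unfold u2; field; lra).
      rewrite E1.
      assert (E2 : (3 * (mm+1) - 4 - 4 * u2) / (mm+1)^2 >= 2 / (mm + 1)).
      { apply Rle_ge. apply Rmult_le_reg_r with ((mm+1)^2). nra.
        replace (2 / (mm + 1) * (mm + 1) ^ 2) with (2 * (mm+1)) by (field; lra).
        replace ((3 * (mm + 1) - 4 - 4 * u2) / (mm + 1) ^ 2 * (mm + 1) ^ 2) with (3 * (mm + 1) - 4 - 4 * u2) by (field; lra).
        lra. }
      assert (Hlb : 0 < lam / 2 * beta^2). { apply Rmult_lt_0_compat. lra. unfold beta. apply pow_lt, Rdiv_lt_0_compat; lra. }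
      apply Rle_ge. apply Rle_trans with (lam / 2 * beta^2 * (2 / (mm+1))).
      2:{ apply Rmult_le_compat_l; lra. }
      rewrite Hb2. unfold lam.
      assert (Hq2 : q^2 * w = 1) by (unfold w; lra).
      assert (Hr2 : r^2 * w = B^2 * K) by (unfold r; replace ((B * q * s)^2 * w) with (B^2 * s^2 * (q^2 * w)) by ring; rewrite Hq2, Hs2; ring).
      assert (Hmm3 : mm <= r / 3) by lra.
      assert (Hmm10 : 10 <= mm) by (assert (5 <= INR M) by (replace 5 with (INR 5) by (simpl; lra); apply le_INR; lia); lra).
      assert (Hmmr : e8 * (mm * (mm + 1)) <= r^2) by nra.
      assert (HL' : L = eps * K) by (unfold K; field; lra).
      replace (L / (e8 * w) / 2 * (B ^ 2 / mm) * (2 / (mm + 1))) with ((B^2 * K) * eps / (e8 * w * mm * (mm+1))) by (rewrite HL'; field; repeat split; lra).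
      rewrite <- Hr2.
      apply Rmult_le_reg_r with (e8 * w * mm * (mm + 1)). { apply Rmult_lt_0_compat; [apply Rmult_lt_0_compat; [nra|]|]; lra. }
      replace (r ^ 2 * w * eps / (e8 * w * mm * (mm + 1)) * (e8 * w * mm * (mm + 1))) with (r^2 * w * eps) by (field; repeat split; lra).
      assert (0 < w * eps) by nra. nra.
Qed.
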